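(* For every agent $i\in[n]$ and every price $p>0$, \[ \mathbb{E}_{v_i\sim\mathcal F_i}[y^*_i(v_i,p)]\ \ge\ \frac{1-H_i(p)}{2\kappa-1},\qquad\text{where } H_i(t)=F_{i,0}(2\kappa t). \]
   Context: Agent $i$ has a valuation $v_i:[0,1]\to\mathbb{R}_{\ge0}$ drawn from a distribution $\mathcal F_i$; almost surely $v_i$ is non-decreasing, concave and differentiable on $[0,1]$ (one-sided derivatives at endpoints), with $v_i(1)>0$ and $v_i'(0)/v_i(1)\le\kappa$ for a fixed $\kappa\ge1$. $F_{i,0}$ is the cdf of $v_i'(0)$ for $v_i\sim\mathcal F_i$. For $p>0$, $y^*_i(v_i,p)\in[0,1]$ is a maximizer of $z\mapsto v_i(z)-pz$ over $[0,1]$ (fixed measurable selection).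
   Formalization: Almost surely each valuation $v_i$ also satisfies the normalization $v_i(0)=0$, a condition not among the listed properties of $v_i$. The statement above fails without it. *)

(* Defs.v *)
From HB Require Import structures.
From mathcomp Require Import all_boot all_order all_algebra.
From mathcomp Require Import all_classical all_reals all_analysis.
Set Implicit Arguments. Unset Strict Implicit. Unset Printing Implicit Defensive.
Import Order.TTheory GRing.Theory Num.Theory.
Import numFieldNormedType.Exports.
Local Open Scope classical_set_scope.
Local Open Scope ring_scope.

Definition rderiv0 {R : realType} (v : R -> R) : R :=
  lim ((fun h : R => h^-1 * (v h - v 0)) @ 0^'+).

Definition admissible_valuation {R : realType} (kappa : R) (v : R -> R) : Prop :=
  (forall x, 0 <= x <= 1 -> 0 <= v x) /\
  v 0 = 0 /\
  (forall x y, 0 <= x -> x <= y -> y <= 1 -> v x <= v y) /\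
  (forall x y t, 0 <= x <= 1 -> 0 <= y <= 1 -> 0 <= t <= 1 ->
      (1 - t) * v x + t * v y <= v ((1 - t) * x + t * y)) /\
  (forall x, 0 < x < 1 -> derivable v x 1) /\
  cvg ((fun h : R => h^-1 * (v h - v 0)) @ 0^'+) /\
  cvg ((fun h : R => h^-1 * (v (1 + h) - v 1)) @ 0^'-) /\
  0 < v 1 /\
  rderiv0 v / v 1 <= kappa.

Definition is_maximizer {R : realType} (v : R -> R) (p y : R) : Prop :=
  0 <= y <= 1 /\ forall z, 0 <= z <= 1 -> v z - p * z <= v y - p * y.

(* Main.v *)
Require Import Defs.
From HB Require Import structures.
From mathcomp Require Import all_boot all_order all_algebra.
From mathcomp Require Import all_classical all_reals all_analysis.
From mathcomp Require Import lra.
Import Order.TTheory GRing.Theory Num.Theory.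
Import numFieldNormedType.Exports.
Local Open Scope classical_set_scope.
Local Open Scope ring_scope.

Lemma tangent_bound (R : realType) (kappa : R) v y :
  admissible_valuation kappa v -> 0 < y <= 1 -> v y / y <= rderiv0 v.
Proof.
move=> [v0 [v00 [vmono [vconc [_ [vcvg _]]]]]] /andP[y0 y1].
rewrite /rderiv0; apply: limr_ge => //.
near=> h.
have h0 : 0 < h by near: h; exact: nbhs_right_gt.
have hy : h < y by near: h; exact: nbhs_right_lt.
have := vconc 0 y (h / y).
rewrite lexx ler01 y1 (ltW y0) /= mulr0 add0r v00 mulr0 add0r.
rewrite divr_ge0 ?(ltW h0) ?(ltW y0) //= ler_pdivrMr // mul1r (ltW hy).
move=> /(_ isT isT isT).
rewrite divfK ?gt_eqF // subr0.
move=> H.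
have -> : v y / y = h^-1 * (h / y * v y).
  by rewrite mulrA mulrA mulVf ?gt_eqF // mul1r mulrC.
by rewrite ler_pM2l ?invr_gt0.
Unshelve. all: end_near.
Qed.

Lemma key_bound (R : realType) (kappa : R) v p y :
  1 <= kappa -> admissible_valuation kappa v -> 0 < p -> is_maximizer v p y ->
  2 * kappa * p < rderiv0 v -> (2 * kappa - 1)^-1 <= y.
Proof.
move=> k1 adm p0 [/andP[y0 y1] ymax] ha.
have adm' := adm.
move: adm' => [_ [v00 [_ [_ [_ [_ [_ [v1pos hk]]]]]]]].
set a := rderiv0 v in ha hk *.
have H1 := ymax 1; rewrite lexx ler01 /= in H1; have {}H1 := H1 isT.
have H2 : v y <= a * y.
  have [->|yp] := eqVneq y 0; first by rewrite v00 mulr0.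
  have ypos : 0 < y by rewrite lt_def yp y0.
  have := @tangent_bound _ _ _ y adm; rewrite ypos y1 => /(_ isT).
  by rewrite ler_pdivrMr.
have H3 : a <= kappa * v 1 by rewrite -ler_pdivrMr.
have H4 : kappa * p * (1 - y) <= a / 2 * (1 - y).
  rewrite ler_wpM2r ?subr_ge0 //. lra.
have H5 : 1 + y <= 2 * kappa * y.
  have apos : 0 < a by apply: lt_trans ha; rewrite !mulr_gt0 //; lra.
  have k0 : 0 <= kappa by lra.
  have E1 : kappa * v 1 <= kappa * (v y + p * (1 - y)).
    by rewrite ler_wpM2l //; lra.
  have E2 : kappa * v y <= kappa * (a * y) by rewrite ler_wpM2l.
  have : a * (1 + y) <= a * (2 * kappa * y) by lra.
  by rewrite ler_pM2l.
have c0 : 0 < 2 * kappa - 1 by lra.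
rewrite -[_^-1]mul1r ler_pdivrMr //; lra.
Qed.

Theorem mainTheorem9 (d : measure_display) (T : measurableType d) (R : realType)
  (P : probability T R) (n : nat) (kappa : R)
  (V : 'I_n -> T -> R -> R)
  (ystar : (R -> R) -> R -> R) :
  1 <= kappa ->
  (forall i, {ae P, forall w, admissible_valuation kappa (V i w)}) ->
  (forall v p, admissible_valuation kappa v -> 0 < p -> is_maximizer v p (ystar v p)) ->
  (forall i p, 0 < p -> measurable_fun setT (fun w => ystar (V i w) p)) ->
  (forall i, measurable_fun setT (fun w => rderiv0 (V i w))) ->
  forall (i : 'I_n) (p : R), 0 < p ->
    let F0 := fun t : R => fine (P [set w | rderiv0 (V i w) <= t]) in
    let H := fun t : R => F0 (2 * kappa * t) in
    (((1 - H p) / (2 * kappa - 1))%:E <= \int[P]_w (ystar (V i w) p)%:E)%E.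
Proof.
move=> k1 Hae Hmax Hmy Hmd i p p0 /=.
set c := (2 * kappa - 1)^-1.
have c0 : 0 < c by rewrite /c invr_gt0; lra.
set A := [set w | 2 * kappa * p < rderiv0 (V i w)].
have mA : measurable A.
  have := Hmd i measurableT `]2 * kappa * p, +oo[%classic.
  rewrite setTI => /(_ (measurable_itv _)).
  congr (measurable _); apply/seteqP; split => w /=; rewrite in_itv /= andbT //.
have HA : fine (P [set w | rderiv0 (V i w) <= 2 * kappa * p]) = 1 - fine (P A).

  have -> : [set w | rderiv0 (V i w) <= 2 * kappa * p] = ~` A.
    apply/seteqP; split => w /=.
    - by rewrite leNgt => /negP.
    - by move/negP; rewrite -leNgt.
  rewrite probability_setC //.
  have : (P A \is a fin_num)%E by rewrite fin_num_measure.
  by move=> /fineK <-.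
rewrite HA.
have -> : (1 - (1 - fine (P A))) * c = c * fine (P A) by rewrite opprB addrC subrK mulrC.
have PAf : (P A \is a fin_num)%E by rewrite fin_num_measure.
rewrite EFinM fineK //.
have -> : P A = (\int[P]_w (\1_A w)%:E)%E by rewrite integral_indic // setIT.
rewrite -ge0_integralZl //; last 2 first.
- by apply/measurable_realfun.measurable_EFinP; exact: measurable_realfun.measurable_indic.
- by rewrite lee_fin ltW.
have Hmy' := Hmy i p p0.
rewrite [X in (_ <= X)%E](@ae_eq_integral _ _ _ P setT (fun w => (Num.max (ystar (V i w) p) 0)%:E)) //; last 3 first.
- exact/measurable_realfun.measurable_EFinP.
- apply/measurable_realfun.measurable_EFinP.
  change (measurable_fun setT ((fun w => ystar (V i w) p) \max (cst 0))).
  exact: (measurable_realfun.measurable_maxr Hmy' (measurable_cst (0:R)%R)).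
- apply: filterS (Hae i) => w adm _.
  have [/andP[y0 _] _] := Hmax _ _ adm p0.
  by congr (_%:E); rewrite max_l.
apply: ae_ge0_le_integral => //.
- by move=> w _; rewrite lee_fin indicE mulr_ge0 // ltW.
- apply/measurable_realfun.measurable_EFinP; apply: measurable_realfun.measurable_funM => //.
- by move=> w _; rewrite lee_fin le_max lexx orbT.
- apply/measurable_realfun.measurable_EFinP.
  change (measurable_fun setT ((fun w => ystar (V i w) p) \max (cst 0))).
  exact: (measurable_realfun.measurable_maxr Hmy' (measurable_cst (0:R)%R)).
apply: filterS (Hae i) => w adm _.
have ymx := Hmax _ _ adm p0.
have [/andP[y0 _] _] := ymx.
rewrite -EFinM lee_fin max_l // indicE.
have [wA|wA] := boolP (w \in A); last by rewrite mulr0.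
rewrite mulr1; apply: key_bound ymx _ => //.
by move: wA; rewrite inE.
Qed.
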